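(* Let $a=(a_i)_{i\in\mathbb Z}$ be any sequence of complex numbers and $\widehat a$ its dual sequence. Then, with $H(u)=1+\sum_{k\ge1}h_ku^{-k}$ and $E(v)=1+\sum_{k\ge1}e_kv^{-k}$, $$1+(u+v)\sum_{p,q=0}^\infty\frac{s_{(p\mid q);a}}{(u-a_1)\cdots(u-a_{p+1})(v-\widehat a_1)\cdots(v-\widehat a_{q+1})}=H(u)E(v),$$ where $(p\mid q)$ is the hook diagram with Frobenius coordinates $p,q$ (i.e. the partition $(p+1,1^q)$), and both sides are regarded as formal series in $u^{-1},v^{-1}$ with coefficients in $\Lambda$.
   Context: $\Lambda$ is the algebra of symmetric functions over $\mathbb C$ with complete homogeneous $h_k$ and elementary $e_k$. For a sequence $a=(a_i)_{i\in\mathbb Z}$ define $h_{k;a}=\sum_{i=1}^k(-1)^{k-i}e_{k-i}(a_1,\dots,a_{k-1})h_i$ for $k\ge1$, $h_{0;a}=1$, $h_{k;a}=0$ for $k<0$; let $(\tau^ra)_i=a_{i+r}$; and set $s_{\mu;a}=\det[h_{\mu_i-i+j;\,\tau^{1-j}a}]_{i,j=1}^N$ for any $N\ge\ell(\mu)$. The dual sequence is $\widehat a_i=-a_{1-i}$. *)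

(* Defs.v *)
(* Lambda (symmetric functions over C) is realised, for each
   number n of variables, inside the polynomial ring {mpoly C[n]}; C = R[i]
   for R : realType (the complex numbers). *)
From HB Require Import structures.
From mathcomp Require Import all_boot all_order all_algebra.
From mathcomp Require Import reals.
From mathcomp.real_closed Require Import complex.
From mathcomp Require Import mpoly.
Set Implicit Arguments. Unset Strict Implicit. Unset Printing Implicit Defensive.
Import GRing.Theory Num.Theory.
Local Open Scope ring_scope.

Section Defs.
Variable R : realType.
Local Notation C := (R[i]).
Variable n : nat.
Local Notation Lam := {mpoly C[n]}.

Definition hsym (k : nat) : Lam :=
  \sum_(m : 'X_{1..n < k.+1} | mdeg m == k) 'X_[m].

Definition esym (k : nat) : Lam := mesym n C k.

Definition escal (s : seq C) (j : nat) : C :=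
  \sum_(I : {set 'I_(size s)} | #|I| == j) \prod_(i in I) s`_i.

Definition hA (a : int -> C) (k : int) : Lam :=
  match k with
  | Posz 0 => 1
  | Posz k'.+1 =>
      \sum_(1 <= i < k'.+2)
        ((-1) ^+ (k'.+1 - i) * escal [seq a (Posz j) | j <- iota 1 k'] (k'.+1 - i))
          *: hsym i
  | Negz _ => 0
  end.

Definition tau (r : int) (a : int -> C) : int -> C := fun i => a (i + r).

Definition dual (a : int -> C) : int -> C := fun i => - a (1 - i).

(* s_{mu;a} = det [h_{mu_i - i + j; tau^{1-j} a}]_{i,j=1..N}, with N = l(mu)
   (mu given by its list of positive parts, so N = size mu) *)
Definition schurA (a : int -> C) (mu : seq nat) : Lam :=
  \det (\matrix_(i < size mu, j < size mu)
          hA (tau (1 - (j.+1)%:Z) a)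
             ((nth 0%N mu i)%:Z - (i.+1)%:Z + (j.+1)%:Z)).

Definition hook (p q : nat) : seq nat := p.+1 :: nseq q 1%N.

(* Formal series in u^{-1} with scalar coefficients: f k = coefficient of u^{-k}. *)
Definition invlin (c : C) (k : nat) : C := if k is k'.+1 then c ^+ k' else 0.
  (* 1/(u - c) = sum_{k>=0} c^k u^{-(k+1)} *)
Definition sermul (f g : nat -> C) (k : nat) : C :=
  \sum_(i < k.+1) f i * g (k - i)%N.
Definition invprod (s : seq C) : nat -> C :=
  foldr (fun c f => sermul (invlin c) f) (fun k => (k == 0%N)%:R) s.

(* S = sum_{p,q>=0} s_{(p|q);a} / ((u-a_1)..(u-a_{p+1}) (v-ahat_1)..(v-ahat_{q+1}));
   coefficient of u^{-M} v^{-N}.  Only p <= M, q <= N contribute (the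
   expansion of the p-th term starts at u^{-(p+1)}), so the sum is finite. *)
Definition Scoef (a : int -> C) (M N : nat) : Lam :=
  \sum_(p < M.+1) \sum_(q < N.+1)
     (invprod [seq a (Posz k) | k <- iota 1 p.+1] M
      * invprod [seq dual a (Posz k) | k <- iota 1 q.+1] N) *: schurA a (hook p q).

(* coefficient of u^{-M} v^{-N} (M N : int) of S (zero for positive powers) *)
Definition SZ (a : int -> C) (M N : int) : Lam :=
  match M, N with Posz m, Posz k => Scoef a m k | _, _ => 0 end.

(* coefficient of u^{-M} v^{-N} of  1 + (u + v) S *)
Definition lhs_coef (a : int -> C) (M N : int) : Lam :=
  ((M == 0) && (N == 0))%:R + SZ a (M + 1) N + SZ a M (N + 1).

Definition Hcoef (M : int) : Lam :=
  match M with Posz 0 => 1 | Posz k => hsym k | Negz _ => 0 end.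
Definition Ecoef (N : int) : Lam :=
  match N with Posz 0 => 1 | Posz k => esym k | Negz _ => 0 end.

End Defs.

(* Main.v *)
Require Import Defs.
From HB Require Import structures.
From mathcomp Require Import all_boot all_order all_algebra.
From mathcomp Require Import reals.
From mathcomp.real_closed Require Import complex.
From mathcomp Require Import mpoly.
From mathcomp Require Import zify.
From Stdlib Require Import FunctionalExtensionality.
Import GRing.Theory Num.Theory.
Local Open Scope ring_scope.

Set Implicit Arguments. Unset Strict Implicit. Unset Printing Implicit Defensive.

Section Proof6.
Variable R : realType.
Local Notation C := (complex R).
Variable n : nat.
Local Notation Lam := {mpoly C[n]}.
Local Notation hA := (@hA R n).

Definition Dm (a : int -> C) (f : nat -> nat) (N : nat) : Lam :=
  \det (\matrix_(i < N, j < N) hA (tau (1 - (j.+1)%:Z) a)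
             ((f i)%:Z - (i.+1)%:Z + (j.+1)%:Z)).

Definition hookf (p : nat) (i : nat) : nat := if i is 0 then p.+1 else 1%N.

Lemma tau0 (a : int -> C) : tau 0 a = a.
Proof. by apply: functional_extensionality => x; rewrite /tau addr0. Qed.

Lemma tau_tau r s (a : int -> C) : tau r (tau s a) = tau (r + s) a.
Proof. by apply: functional_extensionality => x; rewrite /tau addrA. Qed.

Lemma hA_neg (a : int -> C) (k : int) : k < 0 -> hA a k = 0.
Proof. by case: k. Qed.

Opaque Defs.hA.

Lemma schur_hook (a : int -> C) p q : schurA n a (hook p q) = Dm a (hookf p) q.+1.
Proof.
have -> : schurA n a (hook p q) = Dm a (nth 0%N (hook p q)) (size (hook p q)) by [].
rewrite /hook /= size_nseq /Dm; congr (\det _); apply/matrixP => i j; rewrite !mxE.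
case: i => [[|i] Hi] //=.
by rewrite nth_nseq; move: Hi; rewrite ltnS => ->.
Qed.

Lemma hA_eq (a b : int -> C) k l : a = b -> k = l -> hA a k = hA b l.
Proof. by move=> -> ->. Qed.

Lemma tau_eq r s (a : int -> C) : r = s -> tau r a = tau s a.
Proof. by move=> ->. Qed.

Lemma Dm_base (a : int -> C) p : Dm a (hookf p) 1 = hA a (Posz p.+1).
Proof.
rewrite /Dm det_mx11 mxE; apply: hA_eq.
  by rewrite -[RHS]tau0; apply: tau_eq.
by rewrite /= subrK.
Qed.

Lemma sum_two (V : zmodType) q (F : 'I_q.+2 -> V) :
  (forall i : 'I_q, F (lift ord0 (lift ord0 i)) = 0) ->
  \sum_i F i = F ord0 + F (lift ord0 ord0).
Proof. by move=> H; rewrite big_ord_recl big_ord_recl big1 ?addr0. Qed.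

Lemma combine (V : comRingType) (h z e0 e1 d0 d1 D0 D1 : V) :
  z = 1 -> e0 = 1 -> e1 = -1 -> d0 = D0 -> d1 = D1 ->
  h * (e0 * d0) + z * (e1 * d1) = h * D0 - D1.
Proof. by move=> -> -> -> -> ->; rewrite !mul1r mulN1r. Qed.

Lemma Dm_rec (a : int -> C) p q :
  Dm a (hookf p) q.+2 =
  hA a (Posz p.+1) * Dm (tau (-1) a) (hookf 0) q.+1
  - Dm (tau (-1) a) (hookf p.+1) q.+1.
Proof.
rewrite /Dm (expand_det_col _ ord0) sum_two; last first.
  move=> i; rewrite mxE hA_neg; first by rewrite mul0r.
  rewrite !lift0 (_ : hookf p i.+2 = 1%N) //.
rewrite !mxE /cofactor.
have -> : hA (tau (1 - (nat_of_ord (@ord0 q.+1)).+1%:Z) a)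
    ((hookf p (@ord0 q.+1))%:Z - (nat_of_ord (@ord0 q.+1)).+1%:Z + (nat_of_ord (@ord0 q.+1)).+1%:Z)
    = hA a (Posz p.+1).
  apply: hA_eq; first by rewrite -[RHS]tau0; apply: tau_eq.
  by rewrite /= subrK.
apply: combine.
- by apply: (@hA_eq _ _ _ 0).
- by [].
- by [].
- congr (\det _); apply/matrixP => i j; rewrite !mxE !lift0 tau_tau.
  apply: hA_eq.
    apply: tau_eq; lia.
  case: i => [[|i] Hi] /=; lia.
- congr (\det _); apply/matrixP => i j; rewrite !mxE !lift0 tau_tau.
  apply: hA_eq.
    apply: tau_eq; lia.
  case: i => [[|i] Hi] /=; rewrite /bump /=; lia.
Qed.


Local Notation hs := (Defs.hsym R n).
Local Notation es := (Defs.esym R n).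

Definition Lf (B : nat) (x : nat -> Lam) (f : {poly C}) : Lam :=
  \sum_(i < B) f`_i *: x i.
Definition th (i j : nat) : Lam :=
  \sum_(k < i.+1) ((-1) ^+ (i + k) : C) *: (hs k * es (i + j.+1 - k)).
Definition ThB B (f g : {poly C}) := Lf B (fun i => Lf B (fun j => th i j) g) f.
Definition PhiB B (f : {poly C}) := Lf B (fun i => hs i.+1) f.
Definition PsiB B (g : {poly C}) := Lf B (fun j => es j.+1) g.

Implicit Types (f g : {poly C}).

Lemma Lf_add B x f g : Lf B x (f + g) = Lf B x f + Lf B x g.
Proof. by rewrite /Lf -big_split; apply: eq_bigr => i _; rewrite coefD scalerDl. Qed.

Lemma Lf_opp B x f : Lf B x (- f) = - Lf B x f.
Proof. by rewrite /Lf -sumrN; apply: eq_bigr => i _; rewrite coefN scaleNr. Qed.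

Lemma Lf_sub B x f g : Lf B x (f - g) = Lf B x f - Lf B x g.
Proof. by rewrite Lf_add Lf_opp. Qed.

Lemma Lf_C B x c f : Lf B x (c%:P * f) = c *: Lf B x f.
Proof. by rewrite /Lf scaler_sumr; apply: eq_bigr => i _; rewrite coefCM scalerA. Qed.

Lemma Lf_X B x f : (size f <= B)%N -> Lf B.+1 x ('X * f) = Lf B.+1 (fun i => x i.+1) f.
Proof.
move=> Hf; rewrite /Lf big_ord_recl big_ord_recr /= coefXM eqxx scale0r add0r.
rewrite [f`_B]nth_default // scale0r addr0.
by apply: eq_bigr => i _; rewrite coefXM /=.
Qed.

Lemma Lf_xadd B x y f : Lf B (fun i => x i + y i) f = Lf B x f + Lf B y f.
Proof. by rewrite /Lf -big_split; apply: eq_bigr => i _; rewrite scalerDr. Qed.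

Lemma Lf_xscale B x c f : Lf B (fun i => c *: x i) f = c *: Lf B x f.
Proof. by rewrite /Lf scaler_sumr; apply: eq_bigr => i _; rewrite !scalerA mulrC. Qed.

Lemma Lf_ext B x y f : (forall i, x i = y i) -> Lf B x f = Lf B y f.
Proof. by move=> H; apply: eq_bigr => i _; rewrite H. Qed.

Lemma Lf_one B x : (0 < B)%N -> Lf B x 1 = x 0%N.
Proof.
case: B => // B _; rewrite /Lf big_ord_recl coef1 eqxx scale1r big1 ?addr0 //.
by move=> i _; rewrite coef1 /= scale0r.
Qed.

Lemma Lf_mul B x y f g :
  Lf B x f * Lf B y g = Lf B (fun i => Lf B (fun j => x i * y j) g) f.
Proof.
rewrite /Lf mulr_suml; apply: eq_bigr => i _.
rewrite -scalerAl mulr_sumr; congr (_ *: _); apply: eq_bigr => j _.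
by rewrite scalerAr.
Qed.

Lemma th_rec i j : th i.+1 j + th i j.+1 = hs i.+1 * es j.+1.
Proof.
rewrite /th big_ord_recr /= addrAC.
rewrite (eq_bigr (fun k : 'I_i.+1 =>
   - (((-1) ^+ (i + k) : C) *: (hs k * es (i + j.+2 - k))))); last first.
  move=> k _; rewrite addSn exprS mulN1r scaleNr; congr (- (_ *: (_ * es _))); lia.
rewrite sumrN addNr add0r addnn -signr_odd odd_double expr0 scale1r.
by congr (_ * es _); lia.
Qed.

Lemma T3 B f g c : (size f <= B)%N -> (size g <= B)%N ->
  ThB B.+1 (('X - c%:P) * f) g + ThB B.+1 f (('X - (- c)%:P) * g)
  = PhiB B.+1 f * PsiB B.+1 g.
Proof.
move=> Hf Hg.
have E1 : ThB B.+1 (('X - c%:P) * f) g =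
    Lf B.+1 (fun i => Lf B.+1 (th i.+1) g) f - c *: ThB B.+1 f g.
  by rewrite /ThB mulrBl Lf_sub Lf_X // Lf_C.
have E2 : ThB B.+1 f (('X - (- c)%:P) * g) =
    Lf B.+1 (fun i => Lf B.+1 (fun j => th i j.+1) g) f + c *: ThB B.+1 f g.
  rewrite /ThB -Lf_xscale -Lf_xadd; apply: Lf_ext => i.
  by rewrite polyCN opprK mulrDl Lf_add Lf_X // Lf_C.
rewrite E1 E2 addrA addrAC subrK -Lf_xadd /PhiB /PsiB Lf_mul.
apply: Lf_ext => i; rewrite -Lf_xadd; apply: Lf_ext => j.
by rewrite th_rec.
Qed.


Lemma sum_inv (T : finType) (P : pred T) (F : T -> C) (t : T -> T) :
  involutive t -> (forall x, P (t x) = P x) ->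
  (forall x, P x -> F (t x) = - F x) -> \sum_(x | P x) F x = 0.
Proof.
move=> invt Pt Ft.
have E : \sum_(x | P x) F x = - \sum_(x | P x) F x.
  rewrite {1}(reindex_inj (inv_inj invt)) /= -sumrN.
  apply: eq_big => x; first exact: Pt.
  by rewrite Pt => Px; rewrite Ft.
have : (\sum_(x | P x) F x) *+ 2 = 0 by rewrite mulr2n {1}E addNr.
by move/eqP; rewrite mulrn_eq0 /= => /eqP.
Qed.

Lemma hsym_coef k (al : 'X_{1..n}) : (hs k)@_al = (mdeg al == k)%:R.
Proof.
rewrite /Defs.hsym raddf_sum /=.
have [Hd|Hd] := eqVneq (mdeg al) k.
  have pr : (mdeg al < k.+1)%N by rewrite Hd.
  rewrite (bigD1 (BMultinom pr)) /=; last by rewrite Hd.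
  rewrite mcoeffX eqxx big1 ?addr0 // => m Hm.
  rewrite mcoeffX; case: eqP => // E; exfalso.
  have Em : m = BMultinom pr by apply: val_inj.
  by move: Hm; rewrite Em eqxx ?andbF.
rewrite big1 // => m /eqP Hm; rewrite mcoeffX; case: eqP => // E.
by move: Hd; rewrite -E Hm eqxx.
Qed.

Lemma hsym0 : hs 0 = 1.
Proof. by apply/mpolyP => al; rewrite hsym_coef mcoeff1 mdeg_eq0. Qed.

Lemma lem_mdeg (m1 m2 : 'X_{1..n}) : (m1 <= m2)%MM -> (mdeg m1 <= mdeg m2)%N.
Proof. by move=> H; rewrite -(submK H) mdegD leq_addl. Qed.

Lemma hsymX_coef k (mu al : 'X_{1..n}) :
  (hs k * 'X_[mu])@_al = (((mu <= al)%MM) && (mdeg al == k + mdeg mu)%N)%:R.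
Proof.
rewrite /Defs.hsym mulr_suml raddf_sum /=.
under eq_bigr => m _ do rewrite -mpolyXD mcoeffX.
case: (boolP ((mu <= al)%MM && (mdeg al == (k + mdeg mu)%N))) => [/andP[Hle /eqP Hd]|Hn].
  have pr : (mdeg (al - mu)%MM < k.+1)%N.
    by move: Hd; rewrite -{1}(submK Hle) mdegD => /eqP; rewrite eqn_add2r => /eqP ->.
  rewrite (bigD1 (BMultinom pr)) /=; last first.
    by move: Hd; rewrite -{1}(submK Hle) mdegD => /eqP; rewrite eqn_add2r.
  rewrite submK // eqxx big1 ?addr0 // => m Hm.
  case: eqP => // E; exfalso.
  have Em : m = BMultinom pr by apply: val_inj; rewrite /= -E addmK.
  by move: Hm; rewrite Em eqxx ?andbF.
rewrite big1 // => m /eqP Hm; case: eqP => // E.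
by move: Hn; rewrite -E lem_addl mdegD Hm eqxx.
Qed.

Lemma sign_sub (m k : nat) : (k <= m)%N ->
  ((-1) ^+ (m - k) : C) = (-1) ^+ m * (-1) ^+ k.
Proof.
move=> Hk; have kk : ((-1) ^+ k * (-1) ^+ k : C) = 1.
  by rewrite -exprD addnn -signr_odd odd_double.
by rewrite -{2}(subnK Hk) exprD -mulrA kk mulr1.
Qed.

Lemma HE m : (0 < m)%N ->
  \sum_(k < m.+1) ((-1) ^+ k : C) *: (hs k * es (m - k)) = 0.
Proof.
move=> Hm; apply/mpolyP => al; rewrite mcoeff0 raddf_sum /=.
under eq_bigr => k _ do
  rewrite mcoeffZ /Defs.esym mesymE mulr_sumr raddf_sum /=.
under eq_bigr => k _ do under eq_bigr => h _ do rewrite hsymX_coef mdeg_mesym1.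
under eq_bigr => k _ do rewrite mulr_sumr big_mkcond /=.
rewrite exchange_big /=.
pose G (h : {set 'I_n}) : C :=
  (((mesym1 h <= al)%MM && (mdeg al == m)) %:R) * (-1) ^+ (m - #|h|).
rewrite (eq_bigr G); last first.
  move=> h _; rewrite /G.
  have [Hh|Hh] := leqP #|h| m.
    have Hk : (m - #|h| < m.+1)%N by rewrite ltnS leq_subr.
    rewrite (bigD1 (Ordinal Hk)) /=; last by [].
    rewrite subKn // eqxx big1 ?addr0; last first.
      move=> k Hne; case: eqP => // E; exfalso; move/eqP: Hne; apply.
      apply: val_inj => /=; rewrite E subKn //; move: (ltn_ord k); lia.
    by rewrite subnK // mulrC.
  rewrite big1; last first.
    move=> k _; case: eqP => // E; exfalso; move: Hh; rewrite E.
    by rewrite ltnNge leq_subr.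
  case: (boolP (mesym1 h <= al)%MM) => Hle; last by rewrite mul0r.
  case: eqP => Hd; last by rewrite mul0r.
  by move: (lem_mdeg Hle); rewrite mdeg_mesym1 Hd; lia.
have [Hd|Hd] := eqVneq (mdeg al) m; last first.
  by rewrite big1 // => h _; rewrite /G (negbTE Hd) andbF mul0r.
rewrite /G (bigID (fun h => (mesym1 h <= al)%MM)) /= [X in _ + X]big1; last first.
  by move=> h /negbTE ->; rewrite mul0r.
rewrite addr0 Hd eqxx.
rewrite (eq_bigr (fun h : {set 'I_n} => ((-1) ^+ m : C) * (-1) ^+ #|h|)); last first.
  move=> h Hh; rewrite Hh andbT mul1r sign_sub //.
  by move: (lem_mdeg Hh); rewrite mdeg_mesym1 Hd.
rewrite -mulr_sumr.
have [i0 Hi0] : exists i0, (0 < al i0)%N.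
  case: (pickP (fun i => (0 < al i)%N)) => [i Hi|H]; first by exists i.
  move: Hm; rewrite -Hd mdegE big1 // => i _.
  by move: (H i) => /negbT; rewrite -leqNgt leqn0 => /eqP.
rewrite (@sum_inv _ _ _ (fun h : {set 'I_n} => if i0 \in h then h :\ i0 else i0 |: h)) ?mulr0 //.
- move=> h; case: (boolP (i0 \in h)) => Hi.
    by rewrite !inE eqxx /= setD1K.
  by rewrite setU11 setU1K.
- have key : forall b : bool, (b <= al i0)%N.
    by move=> b; apply: leq_trans (leq_b1 b) Hi0.
  move=> h; apply/mnm_lepP/mnm_lepP => H i; move: (H i); rewrite !mnmE;
    (have [->|Hne] := eqVneq i i0; first by move=> _; apply: key);
    by case: (i0 \in h); rewrite /= ?in_setD1 ?in_setU1 (negbTE Hne).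
- move=> h _; case: (boolP (i0 \in h)) => Hi.
    by rewrite [in RHS](cardsD1 i0 h) Hi exprS mulN1r opprK.
  by rewrite cardsU1 Hi exprS mulN1r.
Qed.


Lemma th0j j : th 0 j = es j.+1.
Proof.
by rewrite /th big_ord1 hsym0 mul1r expr0 scale1r add0n subn0.
Qed.

Lemma th_i0 i : th i 0 = hs i.+1.
Proof.
have H := HE (ltn0Sn i); rewrite big_ord_recr /= in H.
rewrite /th (eq_bigr (fun k : 'I_i.+1 =>
   ((-1) ^+ i : C) *: (((-1) ^+ k : C) *: (hs k * es (i.+1 - k))))); last first.
  move=> k _; rewrite scalerA -exprD; congr (_ *: (_ * es _)); lia.
rewrite -scaler_sumr.
move/eqP: H; rewrite addr_eq0 => /eqP ->.
rewrite subnn /Defs.esym mesym0E mulr1 scalerN scalerA -exprD addnS exprS addnn.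
by rewrite -signr_odd odd_double expr0 mulr1 scaleN1r opprK.
Qed.

Lemma T1 B g : (0 < B)%N -> ThB B 1 g = PsiB B g.
Proof. by move=> HB; rewrite /ThB Lf_one //; apply: Lf_ext => j; rewrite th0j. Qed.

Lemma T2 B f : (0 < B)%N -> ThB B f 1 = PhiB B f.
Proof. by move=> HB; rewrite /ThB; apply: Lf_ext => i; rewrite Lf_one // th_i0. Qed.


Definition phi (a : int -> C) (p : nat) : {poly C} :=
  \prod_(x <- [seq a (Posz j) | j <- iota 1 p]) ('X - x%:P).

Lemma size_phi a p : size (phi a p) = p.+1.
Proof. by rewrite /phi size_prod_XsubC size_map size_iota. Qed.

Lemma Lf_cut B x f : (size f <= B)%N -> Lf B x f = \sum_(i < size f) f`_i *: x i.
Proof.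
move=> H; rewrite /Lf (big_ord_widen B (fun i => f`_i *: x i) H).
rewrite (bigID (fun i : 'I_B => (i < size f)%N)) /= [X in _ + X]big1 ?addr0 //.
by move=> i; rewrite -leqNgt => Hi; rewrite nth_default ?scale0r.
Qed.

Lemma coef_phi (s : seq C) i : (i <= size s)%N ->
  (\prod_(x <- s) ('X - x%:P))`_i = (-1) ^+ (size s - i) * escal s (size s - i).
Proof. by move=> H; rewrite coef_prod_XsubC. Qed.

Transparent Defs.hA.

Lemma hA_phi a k B : (k < B)%N -> hA a (Posz k.+1) = PhiB B (phi a k).
Proof.
move=> HB.
change (\sum_(1 <= i < k.+2)
   (((-1) ^+ (k.+1 - i) * escal [seq a (Posz j) | j <- iota 1 k] (k.+1 - i)) *: hs i)
   = PhiB B (phi a k)).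
rewrite /PhiB Lf_cut ?size_phi // big_add1 /= big_mkord.
apply: eq_bigr => i _; rewrite /phi coef_phi; last first.
  by rewrite size_map size_iota -ltnS; exact: ltn_ord.
by rewrite size_map size_iota subSS.
Qed.

Opaque Defs.hA.

Lemma phi_shift a p : phi (tau (-1) a) p.+1 = ('X - (a 0)%:P) * phi a p.
Proof.
rewrite /phi /= big_cons; congr (('X - (_)%:P) * _); try by rewrite /tau.
rewrite (iotaDl 1 1 p) -map_comp; apply: congr_big => //; congr map.
apply: functional_extensionality => j /=; rewrite /tau; congr a; lia.
Qed.

Lemma phi_dual_shift a q :
  phi (dual a) q.+1 = ('X - (- a 0)%:P) * phi (dual (tau (-1) a)) q.
Proof.
rewrite /phi /= big_cons; congr (('X - (_)%:P) * _); try by rewrite /dual.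
rewrite (iotaDl 1 1 q) -map_comp; apply: congr_big => //; congr map.
apply: functional_extensionality => j /=; rewrite /dual /tau; congr (- a _); lia.
Qed.

Lemma phi0 a : phi a 0 = 1.
Proof. by rewrite /phi /= big_nil. Qed.

Lemma main q : forall a p B, (p + q < B)%N ->
  Dm a (hookf p) q.+1 = ThB B (phi a p) (phi (dual a) q).
Proof.
elim: q => [|q IH] a p B HB.
  rewrite Dm_base phi0 T2; last lia.
  by apply: hA_phi; lia.
rewrite Dm_rec (IH _ 0 B) ?(IH _ p.+1 B); try lia.
rewrite phi0 T1; last lia.
rewrite (hA_phi _ (B := B)); last lia.
rewrite phi_shift phi_dual_shift.
case: B HB => [|B] HB; first lia.
rewrite -(T3 (a 0) (f := phi a p) (g := phi (dual (tau (-1) a)) q)) ?size_phi; try lia.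
by rewrite addrAC subrr add0r.
Qed.


Lemma invprod_cons (c : C) l M :
  invprod (c :: l) M = \sum_(t < M.+1) invlin c t * invprod l (M - t).
Proof. by []. Qed.

Lemma invprod_small (l : seq C) M : (M < size l)%N -> invprod l M = 0.
Proof.
elim: l M => [|c l IH] M HM //; move: HM => /= HM.
change (invprod (c :: l) M = 0).
rewrite invprod_cons big1 // => t _; case: t => [[|t] Ht] /=; first by rewrite mul0r.
by rewrite IH ?mulr0 //; lia.
Qed.

Lemma sum_delta (F : nat -> C) M i :
  \sum_(t < M.+1) F t * ((M - t)%N == i)%:R = if (i <= M)%N then F (M - i)%N else 0.
Proof.
case: (leqP i M) => Hi.
  have Ht : (M - i < M.+1)%N by lia.
  rewrite (bigD1 (Ordinal Ht)) //= subKn // eqxx mulr1 big1 ?addr0 // => t Hne.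
  case: eqP => E; last by rewrite mulr0.
  exfalso; move/eqP: Hne; apply; apply: val_inj => /=; move: (ltn_ord t); lia.
rewrite big1 // => t _; case: eqP => E; last by rewrite mulr0.
exfalso; move: (ltn_ord t); lia.
Qed.

Lemma inv_scalar (c : C) M i :
  (if (i <= M)%N then invlin c (M - i) else 0) -
  c * (if (i.+1 <= M)%N then invlin c (M - i.+1) else 0) = (M == i.+1)%:R.
Proof.
case: (leqP i M) => Hi; last first.
  have -> : (i.+1 <= M)%N = false by lia.
  have -> : (M == i.+1) = false by apply/eqP; lia.
  by rewrite mulr0 subr0.
have -> : M = (i + (M - i))%N by lia.
move: (M - i)%N => d; rewrite addKn.
case: d => [|[|d]].
- rewrite addn0 (_ : (i.+1 <= i)%N = false) ?ltnn //= mulr0 subr0.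
  by rewrite (_ : (i == i.+1) = false) //; apply/eqP; lia.
- by rewrite addn1 ltnSn subnn mulr0 subr0 eqxx /= expr0.
- rewrite (_ : (i.+1 <= i + d.+2)%N = true); last by lia.
  rewrite (_ : (i + d.+2 - i.+1 = d.+1)%N); last by lia.
  rewrite (_ : (i + d.+2 == i.+1) = false); last by apply/eqP; lia.
  by rewrite /= exprS subrr.
Qed.

Lemma sum_cut (F : nat -> C) m k : (k <= m)%N ->
  (forall p, (k <= p)%N -> (p < m)%N -> F p = 0) ->
  \sum_(p < m) F p = \sum_(p < k) F p.
Proof.
elim: m => [|m IHm] Hk HF.
  by move: Hk; rewrite leqn0 => /eqP ->.
case: (eqVneq k m.+1) => [-> //|Hne].
rewrite big_ord_recr /= HF ?addr0 //; last by lia.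
by apply: IHm => [|p H1 H2]; [lia | apply: HF; lia].
Qed.

Definition Pl (l : seq C) : {poly C} := \prod_(x <- l) ('X - x%:P).

Lemma Clist (s : seq C) : forall M i, (M < size s)%N ->
  \sum_(p < M.+1) invprod (take p.+1 s) M * (Pl (take p s))`_i = (M == i.+1)%:R.
Proof.
elim: s => [|c s IH] M i HM //.
rewrite big_ord_recl /= take0.
move: HM => /= HM.
have E0 : sermul (invlin c) (invprod [::]) M = invlin c M.
  rewrite /sermul (eq_bigr (fun t : 'I_M.+1 => invlin c t * ((M - t)%N == 0%N)%:R)) //.
  by rewrite sum_delta leq0n subn0.
rewrite E0 /Pl big_nil coef1.
under eq_bigr => p _ do rewrite /bump leq0n add1n add0n big_cons mulrBl coefB coefXM coefCM.
pose Q (p : nat) : C := (if i == 0%N then 0 else (Pl (take p s))`_i.-1) - c * (Pl (take p s))`_i.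
rewrite (eq_bigr (fun p : 'I_M => \sum_(t < M.+1) invlin c t * (invprod (take p.+1 s) (M - t) * Q p))); last first.
  by move=> p _; rewrite /Q /sermul mulr_suml; apply: eq_bigr => t _; rewrite mulrA.
rewrite exchange_big /=.
rewrite (eq_bigr (fun t : 'I_M.+1 => invlin c t *
   ((if i is i'.+1 then ((M - t)%N == i)%:R else 0) - c * ((M - t)%N == i.+1)%:R))); last first.
  move=> [[|t] Ht] _ /=.
    by rewrite big1 ?mul0r // => p _; rewrite mul0r.
  rewrite -mulr_sumr; congr (_ * _).
  have Hk : (M - t.+1 < size s)%N by lia.
  have Ecut : forall F : nat -> C,
      \sum_(p < M) invprod (take p.+1 s) (M - t.+1) * F p =
      \sum_(p < (M - t.+1).+1) invprod (take p.+1 s) (M - t.+1) * F p.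
    move=> F; have HH := @sum_cut (fun p => invprod (take p.+1 s) (M - t.+1) * F p) M (M - t.+1).+1.
    apply: HH => [|p H1 H2]; first by lia.
    rewrite invprod_small ?mul0r // size_take.
    by case: ifP => _; lia.
  rewrite /Q.
  under eq_bigr => p _ do rewrite mulrBr mulrCA.
  rewrite sumrB -mulr_sumr; clear Q.
  case: i => [|i] /=.
    rewrite big1 => [|p _]; last by rewrite mulr0.
    by rewrite (Ecut (fun p => (Pl (take p s))`_0)) (IH _ 0%N Hk).
  rewrite (Ecut (fun p => (Pl (take p s))`_i)) (Ecut (fun p => (Pl (take p s))`_i.+1)).
  by rewrite !(IH _ _ Hk).
under eq_bigr => t _ do rewrite mulrBr mulrCA.
rewrite sumrB -mulr_sumr sum_delta -(inv_scalar c M i); clear Q.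
case: i => [|i] /=.
  rewrite big1 => [|t _]; last by rewrite mulr0.
  by rewrite mulr1 subn0 add0r.
by rewrite mulr0 add0r sum_delta.
Qed.


Lemma Lf_Xn B x k : (k < B)%N -> Lf B x 'X^k = x k.
Proof.
move=> H; rewrite /Lf (bigD1 (Ordinal H)) //= coefXn eqxx scale1r big1 ?addr0 //.
move=> i Hi; rewrite coefXn; case: eqP => E; last by rewrite scale0r.
by exfalso; move/eqP: Hi; apply; apply: val_inj.
Qed.

Lemma Lf0 B x : Lf B x 0 = 0.
Proof. by rewrite /Lf big1 // => i _; rewrite coef0 scale0r. Qed.

Lemma Lf_x0 B f : Lf B (fun _ => 0) f = 0.
Proof. by rewrite /Lf big1 // => i _; rewrite scaler0. Qed.

Lemma Lf_sum B x m (al : nat -> C) (f : nat -> {poly C}) :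
  Lf B x (\sum_(p < m) al p *: f p) = \sum_(p < m) al p *: Lf B x (f p).
Proof.
rewrite /Lf; under eq_bigr => i _ do rewrite coef_sum scaler_suml.
rewrite exchange_big; apply: eq_bigr => p _; rewrite scaler_sumr.
by apply: eq_bigr => i _; rewrite coefZ scalerA.
Qed.

Lemma Lf_xsum B m (be : nat -> C) (x : nat -> nat -> Lam) f :
  Lf B (fun i => \sum_(q < m) be q *: x q i) f = \sum_(q < m) be q *: Lf B (x q) f.
Proof.
rewrite /Lf; under eq_bigr => i _ do rewrite scaler_sumr.
rewrite exchange_big; apply: eq_bigr => q _; rewrite scaler_sumr.
by apply: eq_bigr => i _; rewrite !scalerA mulrC.
Qed.

Lemma Cpoly (c : int -> C) M :
  \sum_(p < M.+1) invprod [seq c (Posz k) | k <- iota 1 p.+1] M *: phi c p =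
  (if M is M'.+1 then 'X^M' else 0).
Proof.
apply/polyP => i; rewrite coef_sum.
under eq_bigr => p _ do rewrite coefZ.
pose s := [seq c (Posz k) | k <- iota 1 M.+1].
have Hs : (M < size s)%N by rewrite size_map size_iota.
have := @Clist s M i Hs.
rewrite (eq_bigr (fun p : 'I_M.+1 =>
   invprod [seq c (Posz k) | k <- iota 1 p.+1] M * (phi c p)`_i)); last first.
  move=> p _; rewrite /s /Pl /phi -!map_take !take_iota.
  by rewrite (minn_idPl (ltn_ord p)) (minn_idPl (ltnW (ltn_ord p))).
move=> ->.
case: M {s Hs} => [|M]; first by rewrite coef0.
by rewrite coefXn eqSS eq_sym.
Qed.

Lemma Scoef_eq a M N :
  Scoef n a M N = if M is M'.+1 then (if N is N'.+1 then th M' N' else 0) else 0.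
Proof.
rewrite /Scoef.
pose B := (M + N).+1.
rewrite (eq_bigr (fun p : 'I_M.+1 => \sum_(q < N.+1)
   (invprod [seq a (Posz k) | k <- iota 1 p.+1] M *
    invprod [seq dual a (Posz k) | k <- iota 1 q.+1] N) *:
   ThB B (phi a p) (phi (dual a) q))); last first.
  move=> p _; apply: eq_bigr => q _; rewrite schur_hook (@main q a p B) //.
  by move: (ltn_ord p) (ltn_ord q); rewrite /B; lia.
have E : ThB B
    (\sum_(p < M.+1) invprod [seq a (Posz k) | k <- iota 1 p.+1] M *: phi a p)
    (\sum_(q < N.+1) invprod [seq dual a (Posz k) | k <- iota 1 q.+1] N *: phi (dual a) q)
  = \sum_(p < M.+1) \sum_(q < N.+1)
   (invprod [seq a (Posz k) | k <- iota 1 p.+1] M *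
    invprod [seq dual a (Posz k) | k <- iota 1 q.+1] N) *:
   ThB B (phi a p) (phi (dual a) q).
  rewrite /ThB (Lf_sum _ _ _ (fun p => invprod [seq a (Posz k) | k <- iota 1 p.+1] M) (phi a)).
  apply: eq_bigr => p _.
  rewrite (@Lf_ext B _ (fun i => \sum_(q < N.+1)
     invprod [seq dual a (Posz k) | k <- iota 1 q.+1] N *: Lf B (th i) (phi (dual a) q))); last first.
    by move=> i; rewrite (Lf_sum _ _ _ (fun q => invprod [seq dual a (Posz k) | k <- iota 1 q.+1] N) (phi (dual a))).
  rewrite (Lf_xsum _ _ (fun q => invprod [seq dual a (Posz k) | k <- iota 1 q.+1] N)
     (fun q i => Lf B (th i) (phi (dual a) q))).
  rewrite scaler_sumr; apply: eq_bigr => q _.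
  by rewrite scalerA.
rewrite -E !Cpoly /ThB.
have HB1 : (M < B)%N by rewrite /B; lia.
have HB2 : (N < B)%N by rewrite /B; lia.
clear E; clearbody B.
case: M HB1 => [|M] HB1; first by rewrite Lf0.
case: N HB2 => [|N] HB2; first by rewrite (@Lf_ext _ _ (fun _ => 0)) ?Lf_x0 // => i; rewrite Lf0.
rewrite Lf_Xn; last by lia.
by rewrite Lf_Xn //; lia.
Qed.


Lemma SZ0 (a : int -> C) M N : (M <= 0) || (N <= 0) -> SZ n a M N = 0.
Proof.
case: M => [m|m]; case: N => [k|k] // H.
change (Scoef n a m k = 0); rewrite Scoef_eq.
by case: m H => [|m] H //; case: k H => [|k] H //.
Qed.

End Proof6.

Unset Implicit Arguments.
Set Strict Implicit.

Theorem theorem6 (R : realType) (n : nat) (a : int -> R[i]) (M N : int) :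
  lhs_coef n a M N = Hcoef R n M * Ecoef R n N.
Proof.
rewrite /lhs_coef.
case: M => [m|m]; last first.
  rewrite !SZ0; [|lia|lia].
  by rewrite addr0 addr0 /= mul0r.
case: N => [k|k]; last first.
  rewrite !SZ0; [|lia|lia].
  by rewrite addr0 addr0 andbF /= mulr0.
have -> : Posz m + 1 = Posz m.+1 by rewrite -[in RHS]addn1 PoszD.
have -> : Posz k + 1 = Posz k.+1 by rewrite -[in RHS]addn1 PoszD.
change (((Posz m == 0) && (Posz k == 0))%:R + Scoef n a m.+1 k + Scoef n a m k.+1
   = Hcoef R n m * Ecoef R n k).
rewrite !Scoef_eq.
case: m => [|m]; case: k => [|k].
- by rewrite /= addr0 addr0 mulr1.
- by rewrite /= add0r addr0 mul1r th0j.
- by rewrite /= add0r add0r mulr1 th_i0.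
- by rewrite /= add0r th_rec.
Qed.
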